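(* For $n\ge 0$ let $P^{(2)}_n(z_1,z_2)=\sum_{\pi} z_1^{a_1(\pi)}z_2^{a_2(\pi)}$, the sum over all multiset set-partitions $\pi$ of the multiset $\{1^2,2^2,\dots,n^2\}$ (each of $1,\dots,n$ appearing exactly twice); in particular $P^{(2)}_0=1$. Let $D_1=\partial/\partial z_1$, $D_2=\partial/\partial z_2$ and let $\mathcal{D}_2$ be the partial differential operator $$\mathcal{D}_2= z_2D_2+\tfrac12 z_1^4D_2^2+z_1^3D_1D_2+\tfrac12 z_1^2D_1^2+z_1^3D_2+z_1^2D_1+z_2 ,$$ where each term acts by first applying the indicated derivatives and then multiplying by the indicated monomial. Then for all $n\ge1$, $$P^{(2)}_n(z_1,z_2)=\mathcal{D}_2\,P^{(2)}_{n-1}(z_1,z_2).$$ Consequently the number of multiset set-partitions of $\{1^2,\dots,n^2\}$ equals $P^{(2)}_n(1,1)$.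
   Context: A multiset set-partition of a finite multiset $M$ is a finite multiset of nonempty sets (ordinary sets, no repeated elements inside a set) whose multiset union equals $M$; the same set may occur several times in the partition, and the partition is unordered. For a multiset set-partition $\pi$ and $i\ge1$, $a_i(\pi)$ denotes the number of distinct sets that occur in $\pi$ exactly $i$ times. *)

(* Defs.v *)
From HB Require Import structures.
From mathcomp Require Import all_boot all_order all_algebra.
Set Implicit Arguments. Unset Strict Implicit. Unset Printing Implicit Defensive.
Import GRing.Theory.
Local Open Scope ring_scope.

(* A multiset set-partition of {1^2,...,n^2} (ground set encoded as 'I_n) is
   encoded by its multiplicity function m : {set 'I_n} -> 'I_3, m S being the
   number of times the set S occurs in the partition.  Multiplicities are at
   most 2 in any such partition (each nonempty S contains some i occurring
   exactly twice), so 'I_3 loses nothing. *)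
Definition is_mspart (n : nat) (m : {ffun {set 'I_n} -> 'I_3}) : bool :=
  (nat_of_ord (m set0) == 0%N) &&
  [forall i : 'I_n, (\sum_(S : {set 'I_n} | i \in S) nat_of_ord (m S))%N == 2%N].

Definition a_k (n k : nat) (m : {ffun {set 'I_n} -> 'I_3}) : nat :=
  #|[set S : {set 'I_n} | nat_of_ord (m S) == k]|.

(* Bivariate polynomials in z1, z2 over rat: {poly {poly rat}},
   inner variable = z1, outer variable = z2. *)
Notation bipoly := {poly {poly rat}}.
Definition z1 : bipoly := ('X)%:P.
Definition z2 : bipoly := 'X.
Definition D1 (p : bipoly) : bipoly := map_poly (@deriv rat) p.
Definition D2 (p : bipoly) : bipoly := deriv p.

Definition P2 (n : nat) : bipoly :=
  \sum_(m : {ffun {set 'I_n} -> 'I_3} | is_mspart m)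
     z1 ^+ (a_k 1 m) * z2 ^+ (a_k 2 m).

Definition half : bipoly := (2%:R^-1 : rat)%:P%:P.
Definition Dop2 (p : bipoly) : bipoly :=
  z2 * D2 p + half * z1 ^+ 4 * D2 (D2 p) + z1 ^+ 3 * D1 (D2 p)
  + half * z1 ^+ 2 * D1 (D1 p) + z1 ^+ 3 * D2 p + z1 ^+ 2 * D1 p + z2 * p.

Definition eval2 (p : bipoly) (a b : rat) : rat := (p.[b%:P]).[a].

(* Main.v *)
Require Import Defs.
From HB Require Import structures.
From mathcomp Require Import all_boot all_order all_algebra.
From Stdlib Require Import Ring.
Set Implicit Arguments. Unset Strict Implicit. Unset Printing Implicit Defensive.
Import GRing.Theory.
Local Open Scope ring_scope.

Definition wd (n : nat) (i : 'I_n) : 'I_n.+1 := widen_ord (leqnSn n) i.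
Definition upS (n : nat) (Y : {set 'I_n}) : {set 'I_n.+1} := [set wd i | i in Y].
Definition extS (n : nat) (Y : {set 'I_n}) : {set 'I_n.+1} := ord_max |: upS Y.
Definition downS (n : nat) (X : {set 'I_n.+1}) : {set 'I_n} := [set i | wd i \in X].

Lemma wd_inj n : injective (@wd n).
Proof. by move=> i j /(congr1 val) h; apply/val_inj. Qed.

Lemma wd_neq_max n (i : 'I_n) : (wd i == ord_max) = false.
Proof. by apply/negbTE; rewrite -val_eqE /= neq_ltn ltn_ord. Qed.

Lemma in_upS n (Y : {set 'I_n}) i : (wd i \in upS Y) = (i \in Y).
Proof. by rewrite /upS mem_imset //; apply: wd_inj. Qed.

Lemma max_notin_upS n (Y : {set 'I_n}) : (ord_max \in upS Y) = false.
Proof. by apply/negbTE/imsetP=> [[i _ /eqP]]; rewrite eq_sym wd_neq_max. Qed.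

Lemma in_extS n (Y : {set 'I_n}) i : (wd i \in extS Y) = (i \in Y).
Proof. by rewrite /extS in_setU1 wd_neq_max in_upS. Qed.

Lemma max_in_extS n (Y : {set 'I_n}) : ord_max \in extS Y.
Proof. by rewrite /extS setU11. Qed.

Lemma downS_upS n (Y : {set 'I_n}) : downS (upS Y) = Y.
Proof. by apply/setP=> i; rewrite inE in_upS. Qed.

Lemma downS_extS n (Y : {set 'I_n}) : downS (extS Y) = Y.
Proof. by apply/setP=> i; rewrite inE in_extS. Qed.

Lemma ord_split n (j : 'I_n.+1) : j = ord_max \/ exists i, j = wd i.
Proof.
case: (unliftP ord_max j) => [i ->|->]; last by left.
right; exists i; apply/val_inj; rewrite /= /bump leqNgt ltn_ord.
done.
Qed.

Lemma upS_downS n (X : {set 'I_n.+1}) : ord_max \notin X -> upS (downS X) = X.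
Proof.
move=> hX; apply/setP=> j; case: (ord_split j) => [->|[i ->]].
  by rewrite max_notin_upS (negbTE hX).
by rewrite in_upS inE.
Qed.

Lemma extS_downS n (X : {set 'I_n.+1}) : ord_max \in X -> extS (downS X) = X.
Proof.
move=> hX; apply/setP=> j; case: (ord_split j) => [->|[i ->]].
  by rewrite max_in_extS hX.
by rewrite in_extS inE.
Qed.

Lemma upS_neq_extS n (Y Z : {set 'I_n}) : (upS Y == extS Z) = false.
Proof.
apply/negbTE/eqP=> h; have := max_in_extS Z; by rewrite -h max_notin_upS.
Qed.

Lemma split_big (R : Type) (idx : R) (op : Monoid.com_law idx) n
   (F : {set 'I_n.+1} -> R) :
  \big[op/idx]_X F X = \big[op/idx]_(Y : {set 'I_n}) op (F (upS Y)) (F (extS Y)).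
Proof.
rewrite (partition_big (@downS n) xpredT) //=.
apply: eq_bigr => Y _.
rewrite (bigD1 (upS Y)) /=; last by rewrite downS_upS.
rewrite (bigD1 (extS Y)) /=; last by rewrite downS_extS eqxx eq_sym upS_neq_extS.
rewrite big_pred0 ?Monoid.mulm1 // => X.
apply/negbTE; apply/andP=> [[/andP[/eqP hd hu] he]].
case: (boolP (ord_max \in X)) => hX.
  by move: he; rewrite -(extS_downS hX) hd eqxx.
by move: hu; rewrite -(upS_downS hX) hd eqxx.
Qed.

Local Close Scope ring_scope.

Lemma split_sum_in n (i : 'I_n) (F : {set 'I_n.+1} -> nat) :
  \sum_(X : {set 'I_n.+1} | wd i \in X) F X = \sum_(Y : {set 'I_n} | i \in Y) (F (upS Y) + F (extS Y)).
Proof.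
rewrite big_mkcond split_big [RHS]big_mkcond /=.
by apply: eq_bigr => Y _; rewrite in_upS in_extS; case: (i \in Y).
Qed.

Lemma split_sum_max n (F : {set 'I_n.+1} -> nat) :
  \sum_(X : {set 'I_n.+1} | ord_max \in X) F X = \sum_(Y : {set 'I_n}) F (extS Y).
Proof.
rewrite big_mkcond split_big /=.
by apply: eq_bigr => Y _; rewrite max_in_extS max_notin_upS.
Qed.

Definition ff n := {ffun {set 'I_n} -> 'I_3}.

Definition buildM n (m' b : ff n) : ff n.+1 :=
  [ffun X : {set 'I_n.+1} => if ord_max \in X then b (downS X)
             else inord (m' (downS X) - b (downS X))].
Definition rM n (m : ff n.+1) : ff n :=
  [ffun Y : {set 'I_n} => if Y == set0 then ord0 else inord (m (upS Y) + m (extS Y))].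
Definition cM n (m : ff n.+1) : ff n := [ffun Y : {set 'I_n} => m (extS Y)].
Definition admb n (m' b : ff n) : bool :=
  (\sum_Y (b Y : nat) == 2)%N && [forall Y, (Y != set0) ==> (b Y <= m' Y)%N].

Lemma buildM_up n (m' b : ff n) Y :
  nat_of_ord (buildM m' b (upS Y)) = (m' Y - b Y)%N.
Proof.
rewrite ffunE max_notin_upS downS_upS inordK //.
by apply: leq_ltn_trans (leq_subr _ _) (ltn_ord _).
Qed.

Lemma buildM_ext n (m' b : ff n) Y : buildM m' b (extS Y) = b Y.
Proof. by rewrite ffunE max_in_extS downS_extS. Qed.

Lemma set0_nonempty n (Y : {set 'I_n}) i : i \in Y -> (Y == set0) = false.
Proof. by move=> h; apply/negbTE/set0Pn; exists i. Qed.

Lemma build_valid n (m' b : ff n) :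
  is_mspart m' -> admb m' b -> is_mspart (buildM m' b).
Proof.
case/andP=> /eqP h0 /forallP hv /andP[/eqP hs /forallP hb].
apply/andP; split.
  rewrite -(upS_downS (X := set0)) ?inE // buildM_up.
  have -> : downS (set0 : {set 'I_n.+1}) = set0 by apply/setP=> i; rewrite !inE.
  by rewrite h0.
apply/forallP => j; case: (ord_split j) => [->|[i ->]].
  by rewrite split_sum_max; under eq_bigr do rewrite buildM_ext; rewrite hs.
rewrite split_sum_in; apply/eqP.
transitivity (\sum_(Y : {set 'I_n} | i \in Y) (m' Y : nat)); last exact/eqP/hv.
apply/eq_bigr => Y hY.
rewrite buildM_up buildM_ext subnK //.
by have := hb Y; rewrite (set0_nonempty hY).
Qed.

Lemma sum_le2 n (m : ff n.+1) (i : 'I_n) (Y : {set 'I_n}) : is_mspart m -> i \in Y ->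
  (m (upS Y) + m (extS Y) <= 2)%N.
Proof.
case/andP=> _ /forallP /(_ (wd i)) /eqP; rewrite split_sum_in => h hY.
by apply: (leq_trans _ (eq_leq h)); rewrite (bigD1 Y) //= leq_addr.
Qed.

Lemma decomp_valid n (m : ff n.+1) : is_mspart m -> is_mspart (rM m).
Proof.
move=> hm; apply/andP; split; first by rewrite ffunE eqxx.
apply/forallP => i; move: (hm) => /andP[_ /forallP /(_ (wd i)) /eqP].
rewrite split_sum_in => h; apply/eqP; rewrite -[X in _ = X]h.
apply/eq_bigr => Y hY.
by rewrite ffunE (set0_nonempty hY) inordK // ltnS (sum_le2 hm hY).
Qed.

Lemma decomp_adm n (m : ff n.+1) : is_mspart m -> admb (rM m) (cM m).
Proof.
move=> hm; apply/andP; split.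
  move: (hm) => /andP[_ /forallP /(_ ord_max) /eqP]; rewrite split_sum_max => h.
  by apply/eqP; rewrite -[X in _ = X]h; apply/eq_bigr => Y _; rewrite ffunE.
apply/forallP => Y; apply/implyP => hY; rewrite !ffunE (negbTE hY).
case/set0Pn: hY => i hi.
by rewrite inordK ?leq_addl // ltnS (sum_le2 hm hi).
Qed.

Lemma build_decomp n (m : ff n.+1) : is_mspart m -> buildM (rM m) (cM m) = m.
Proof.
move=> hm; apply/ffunP => X; apply/val_inj.
case: (boolP (ord_max \in X)) => hX.
  have -> : X = extS (downS X) by rewrite extS_downS.
  by rewrite buildM_ext ffunE.
have -> : X = upS (downS X) by rewrite upS_downS.
change (nat_of_ord (buildM (rM m) (cM m) (upS (downS X))) = m (upS (downS X))).
rewrite buildM_up !ffunE.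
case: (boolP (downS X == set0)) => hd.
  move: (hm) => /andP[/eqP h0 _]; rewrite (eqP hd) /=.
  have -> : upS (set0 : {set 'I_n}) = set0 by apply/setP=> j; rewrite inE; apply/imsetP=> [[k]]; rewrite inE.
  by rewrite h0.
case/set0Pn: hd => i hi.
by rewrite inordK ?addnK // ltnS (sum_le2 hm hi).
Qed.

Lemma decomp_build n (m' b : ff n) : is_mspart m' -> admb m' b ->
  rM (buildM m' b) = m' /\ cM (buildM m' b) = b.
Proof.
move=> /andP[/eqP h0 _] /andP[_ /forallP hb]; split; apply/ffunP => Y; rewrite ffunE.
  case: (boolP (Y == set0)) => hY; first by apply/val_inj; rewrite (eqP hY); change (0%N = nat_of_ord (m' set0)); rewrite h0.
  apply/val_inj => /=.
  rewrite buildM_up buildM_ext subnK ?inordK //.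
  by have := hb Y; rewrite hY.
by rewrite buildM_ext.
Qed.

Local Open Scope ring_scope.

Definition sel (R : pzSemiRingType) (A B : R) (k : nat) : R :=
  if k == 1%N then A else if k == 2%N then B else 1.

Lemma prod_sel (R : comPzSemiRingType) n (m : ff n) (A B : R) :
  \prod_X sel A B (m X) = A ^+ a_k 1 m * B ^+ a_k 2 m.
Proof.
transitivity (\prod_X ((if nat_of_ord (m X) == 1%N then A else 1) *
                       (if nat_of_ord (m X) == 2%N then B else 1))).
  by apply: eq_bigr => X _; rewrite /sel; case: (nat_of_ord (m X)) => [|[|[|k]]]; rewrite ?mulr1 ?mul1r.
rewrite big_split /= -!big_mkcond /= !prodr_const /a_k !cardsE.
done.
Qed.

Lemma P2_reindex n : P2 n.+1 = \sum_(m' : ff n | is_mspart m')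
   \sum_(b : ff n | admb m' b) \prod_(X : {set 'I_n.+1}) sel z1 z2 (buildM m' b X).
Proof.
rewrite pair_big_dep /= /P2.
rewrite (partition_big (fun p : ff n * ff n => buildM p.1 p.2) (@is_mspart n.+1)) /=; last first.
  by move=> [m' b] /andP[h1 h2]; apply: build_valid.
apply: eq_bigr => m hm.
rewrite (big_pred1 (rM m, cM m)) /=; last first.
  move=> [m' b] /=; apply/idP/idP.
    case/andP=> /andP[h1 h2] /eqP <-.
    by case: (decomp_build h1 h2) => -> ->.
  move/eqP=> [-> ->]; rewrite decomp_valid // decomp_adm // build_decomp //= eqxx.
by rewrite build_decomp // prod_sel.
Qed.

Lemma inner_prod n (m' b : ff n) : \prod_(X : {set 'I_n.+1}) sel z1 z2 (buildM m' b X)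
  = \prod_(Y : {set 'I_n}) (sel z1 z2 (m' Y - b Y) * sel z1 z2 (b Y)).
Proof.
rewrite (@split_big _ _ (@GRing.mul bipoly)); apply: eq_bigr => Y _.
by rewrite buildM_up buildM_ext.
Qed.

Definition fw n (m' : ff n) (Y : {set 'I_n}) (j : nat) : bipoly :=
  if (Y == set0) || (j <= m' Y)%N then sel z1 z2 (m' Y - j) * sel z1 z2 j else 0.

Lemma inner_sum n (m' : ff n) :
  \sum_(b : ff n | admb m' b) \prod_Y (sel z1 z2 (m' Y - b Y) * sel z1 z2 (b Y))
  = \sum_(b : ff n | (\sum_Y (b Y : nat) == 2)%N) \prod_Y fw m' Y (b Y).
Proof.
rewrite big_mkcond [RHS]big_mkcond; apply: eq_bigr => b _.
rewrite /admb; case: (_ == 2)%N => //=.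
case: (boolP [forall _, _]) => [/forallP h | ].
  apply: eq_bigr => Y _; rewrite /fw; have := h Y.
  by case: (Y == set0) => //= ->.
rewrite negb_forall => /existsP [Y]; rewrite negb_imply => /andP[hY hb].
rewrite (bigD1 Y) //= /fw (negbTE hY) /= (negbTE hb) mul0r //.
Qed.

Lemma gf n (F : {set 'I_n} -> nat -> bipoly) :
  \sum_(b : ff n | (\sum_Y (b Y : nat) == 2)%N) \prod_Y F Y (b Y)
  = (\prod_(Y : {set 'I_n}) \sum_(j : 'I_3) (F Y j)%:P * 'X^j)`_2.
Proof.
rewrite bigA_distr_bigA /= coef_sum big_mkcond /=.
apply: eq_bigr => b _.
rewrite big_split /= -rmorph_prod prodrXr coefCM coefXn.
by case: eqP => [->|]; rewrite ?eqxx ?mulr1 // => /nesym/eqP/negbTE ->; rewrite mulr0.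
Qed.

Definition T := {poly {poly rat}}.
Definition tadd (x y : T) : T := x + y.
Definition tmul (x y : T) : T := x * y.
Definition tsub (x y : T) : T := x - y.
Definition topp (x : T) : T := - x.
Definition t0 : T := 0.
Definition t1 : T := 1.
Lemma T_rt : @ring_theory T t0 t1 tadd tmul tsub topp eq.
Proof.
constructor; rewrite /tadd/tmul/tsub/topp/t0/t1; [exact: add0r|exact: addrC|exact: addrA|exact: mul1r|exact: mulrC|
  exact: mulrA|exact: mulrDl|by []|exact: subrr].
Qed.
Add Ring TR : T_rt.
Lemma foldA (x y : bipoly) : x + y = tadd x y. Proof. by []. Qed.
Lemma foldM (x y : bipoly) : x * y = tmul x y. Proof. by []. Qed.
Lemma fold0 : (0 : bipoly) = t0. Proof. by []. Qed.
Lemma fold1 : (1 : bipoly) = t1. Proof. by []. Qed.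
Definition tnat (k : nat) : T := k%:R.
Definition texp (x : T) (k : nat) : T := x ^+ k.
Lemma foldN k : (k%:R : bipoly) = tnat k. Proof. by []. Qed.
Lemma foldX (x : bipoly) k : x ^+ k = texp x k. Proof. by []. Qed.
Ltac tfold t := lazymatch t with
 | @Algebra.add _ ?a ?b => let a' := tfold a in let b' := tfold b in constr:(tadd a' b')
 | @GRing.mul _ ?a ?b => let a' := tfold a in let b' := tfold b in constr:(tmul a' b')
 | @Algebra.zero _ => constr:(t0)
 | @GRing.one _ => constr:(t1)
 | _ => t end.
Ltac bring2 := lazymatch goal with |- ?l = ?r =>
  let l' := tfold l in let r' := tfold r in change (@eq T l' r') end; ring.
Ltac bring := rewrite ?foldN ?foldX; bring2.

Goal forall x y : bipoly, (x + y) * (x + 0) = x * x + y * x * 1.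
Proof. move=> x y; bring. Qed.

Notation PT := {poly bipoly}.

Lemma coefM0 (p q : PT) : (p * q)`_0 = p`_0 * q`_0.
Proof. by rewrite coefM big_ord_recl big_ord0 addr0. Qed.
Lemma coefM1 (p q : PT) : (p * q)`_1 = p`_0 * q`_1 + p`_1 * q`_0.
Proof. by rewrite coefM !big_ord_recl big_ord0 addr0. Qed.
Lemma coefM2 (p q : PT) : (p * q)`_2 = p`_0 * q`_2 + p`_1 * q`_1 + p`_2 * q`_0.
Proof. by rewrite coefM !big_ord_recl big_ord0 addr0 addrA. Qed.

Lemma natS_norm k : (k.+1)%:R = 1 + k%:R :> bipoly.
Proof. by rewrite mulrS. Qed.

Lemma pow0 (p : PT) k : (p ^+ k)`_0 = p`_0 ^+ k.
Proof.
elim: k => [|k IH]; first by rewrite !expr0 coefC.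
by rewrite exprS coefM0 IH exprS.
Qed.

Lemma pow1 (p : PT) k : (p ^+ k)`_1 = k%:R * p`_0 ^+ k.-1 * p`_1.
Proof.
elim: k => [|k IH]; first by rewrite expr0 coefC /= mul0r mul0r.
rewrite exprS coefM1 IH pow0.
case: k {IH} => [|k] /=; rewrite ?natS_norm ?mulr0n ?exprS ?expr0; bring.
Qed.

Lemma pow2 (p : PT) k : (p ^+ k)`_2 =
  k%:R * p`_0 ^+ k.-1 * p`_2 + 'C(k, 2)%:R * p`_0 ^+ k.-2 * p`_1 ^+ 2.
Proof.
elim: k => [|k IH]; first by rewrite expr0 coefC /= !mul0r addr0.
rewrite exprS coefM2 IH pow0 pow1.
case: k {IH} => [|[|k]] /=; rewrite ?binS ?bin1 ?bin0 ?natrD ?natS_norm ?mulr0n ?exprS ?expr0; bring.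
Qed.

Lemma D2mon (c : {poly rat}) b : D2 (c%:P * 'X^b) = (c *+ b)%:P * 'X^(b.-1).
Proof. by rewrite /D2 mul_polyC derivZ derivXn -mul_polyC polyCMn mulrnAl mulrnAr. Qed.

Lemma D1mon (c : {poly rat}) b : D1 (c%:P * 'X^b) = (deriv c)%:P * 'X^b.
Proof.
apply/polyP => i; rewrite /D1 coef_map /= !coefCM coefXn.
by case: eqP => _; rewrite ?mulr1 ?mulr0 // linear0.
Qed.

Lemma mon (a b : nat) : z1 ^+ a * z2 ^+ b = ('X^a)%:P * 'X^b.
Proof. by rewrite /z1 /z2 rmorphXn. Qed.

Lemma Dop2_mon a b : Dop2 (z1 ^+ a * z2 ^+ b) =
  z2 * ((z1^+a) *+ b * z2^+b.-1)
  + Defs.half * z1^+4 * ((z1^+a *+ b) *+ b.-1 * z2^+(b.-1).-1)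
  + z1^+3 * ((z1^+a.-1 *+ a) *+ b * z2^+b.-1)
  + Defs.half * z1^+2 * ((z1^+(a.-1).-1 *+ a.-1) *+ a * z2^+b)
  + z1^+3 * (z1^+a *+ b * z2^+ b.-1)
  + z1^+2 * (z1^+a.-1 *+ a * z2^+b)
  + z2 * (z1^+a * z2^+b).
Proof.
rewrite /Dop2 mon.
set c : {poly rat} := 'X^a.
rewrite (D2mon c b) (D2mon (c *+ b) b.-1) (D1mon (c *+ b) b.-1) (D1mon c b) (D1mon (deriv c) b).
rewrite /c !derivMn !derivXn !derivMn !derivXn !polyCMn /z1 /z2 !rmorphXn /=.
done.
Qed.

Lemma bin2_nat k : (2 * 'C(k, 2) = k * k.-1)%N.
Proof. by rewrite mul_bin_left bin1 mulnC subn1. Qed.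

Lemma half2 : Defs.half * 2%:R = 1.
Proof.
rewrite /Defs.half -!polyCMn -!polyCM.
by rewrite mulVf.

Qed.

Lemma bin2_R k : ('C(k, 2)%:R : bipoly) = Defs.half * (k%:R * (k.-1)%:R).
Proof.
by rewrite -natrM -bin2_nat natrM mulrA half2 mul1r.
Qed.

Definition cpoly (c : nat -> bipoly) : PT := \sum_(j < 3) (c j)%:P * 'X^j.

Lemma coef_cpoly c i : (cpoly c)`_i = if (i < 3)%N then c i else 0.
Proof.
rewrite /cpoly coef_sum.
under eq_bigr do rewrite coefCM coefXn.
case: ltnP => hi.
  rewrite (bigD1 (Ordinal hi)) //= eqxx mulr1 big1 ?addr0 // => j hj.
  have -> : (i == j) = false by apply/negbTE; apply: contra hj => /eqP h; apply/eqP/val_inj.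
  by rewrite mulr0.
by apply: big1 => j _; rewrite gtn_eqF ?mulr0 // (leq_trans (ltn_ord j) hi).
Qed.

Definition selP := sel z1 z2.
Definition qk (k : nat) : PT :=
  cpoly (fun j => if (j <= k)%N then sel z1 z2 (k - j) * sel z1 z2 j else 0).
Definition q0 : PT := cpoly (sel z1 z2).

Lemma tnatS k : tnat k.+1 = t1 + tnat k.
Proof. by rewrite /tnat mulrS. Qed.
Lemma tnat0 : tnat 0 = t0.
Proof. by []. Qed.
Lemma mulrn_norm (x : bipoly) n : x *+ n = tnat n * x.
Proof. by rewrite /tnat mulr_natl. Qed.

Lemma texpS x k : texp x k.+1 = x * texp x k.
Proof. exact: exprS. Qed.
Lemma texp0 x : texp x 0 = 1.
Proof. exact: expr0. Qed.

Lemma final a b : (q0 * qk 1 ^+ a * qk 2 ^+ b)`_2 = Dop2 (z1 ^+ a * z2 ^+ b).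
Proof.
rewrite -mulrA coefM2 coefM0 coefM1 coefM2 !pow0 !pow1 !pow2 !coef_cpoly /=.
rewrite Dop2_mon !bin2_R /sel /= ?mulr1 ?mul1r ?mulr0 ?addr0.
case: a => [|[|a]]; case: b => [|[|b]] /=.
all: rewrite ?mulrn_norm ?tnatS ?tnat0.
all: rewrite ?foldX ?texpS ?texp0.
all: bring2.
Qed.

Lemma cpoly_ext (c d : nat -> bipoly) :
  (forall j, (j < 3)%N -> c j = d j) -> cpoly c = cpoly d.
Proof. by move=> h; apply: eq_bigr => j _; rewrite h. Qed.

Lemma qk0 : qk 0 = 1.
Proof.
rewrite /qk /cpoly !big_ord_recr big_ord0 /= /sel /=.
by rewrite add0r !polyC0 !mul0r !addr0 mulr1 expr0 mulr1.
Qed.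

Lemma sel_qk (k : nat) : (k < 3)%N -> sel (qk 1) (qk 2) k = qk k.
Proof. by case: k => [|[|[|k]]] //= _; rewrite qk0. Qed.

Lemma inner_total n (m' : ff n) : is_mspart m' ->
  \sum_(b : ff n | admb m' b) \prod_(X : {set 'I_n.+1}) sel z1 z2 (buildM m' b X)
  = Dop2 (z1 ^+ a_k 1 m' * z2 ^+ a_k 2 m').
Proof.
move=> hm; move: (hm) => /andP[/eqP h0 _].
under eq_bigr do rewrite inner_prod.
rewrite inner_sum gf -final -mulrA -prod_sel.
congr (_)`_2.
rewrite (bigD1 set0) //= [in RHS](bigD1 set0) //= h0 /sel /= mul1r.
have e0 : \sum_(j < 3) (fw m' set0 j)%:P * 'X^j = q0.
  change (cpoly (fw m' set0) = cpoly (sel z1 z2)).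
  apply: cpoly_ext => j hj; rewrite /fw eqxx /= h0 /sel.
  by rewrite sub0n mul1r.
have e1 : \prod_(i | i != set0) \sum_(j < 3) (fw m' i j)%:P * 'X^j =
  \prod_(i | i != set0) (if nat_of_ord (m' i) == 1%N then qk 1 else if nat_of_ord (m' i) == 2%N then qk 2 else 1).
  apply: eq_bigr => Y hY.
  rewrite -/(sel (qk 1) (qk 2) (m' Y)) sel_qk //.
  change (cpoly (fw m' Y) = qk (m' Y)).
  by apply: cpoly_ext => j hj; rewrite /fw (negbTE hY).
by rewrite e0 e1.
Qed.

Lemma D1D (x y : bipoly) : D1 (x + y) = D1 x + D1 y.
Proof. by rewrite /D1 raddfD. Qed.
Lemma D2D (x y : bipoly) : D2 (x + y) = D2 x + D2 y.
Proof. by rewrite /D2 derivD. Qed.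
Lemma D10 : D1 0 = 0. Proof. by rewrite /D1 raddf0. Qed.
Lemma D20 : D2 0 = 0. Proof. by rewrite /D2 deriv0. Qed.

Lemma Dop2D (x y : bipoly) : Dop2 (x + y) = Dop2 x + Dop2 y.
Proof. rewrite /Dop2 (D2D x y) (D1D x y) (D2D (D2 x) (D2 y)) (D1D (D2 x) (D2 y)) (D1D (D1 x) (D1 y)); bring2. Qed.
Lemma Dop20 : Dop2 0 = 0.
Proof. rewrite /Dop2 D20 D10 D20 D10; bring2. Qed.

Lemma P2_rec n : P2 n.+1 = Dop2 (P2 n).
Proof.
rewrite P2_reindex /P2 (big_morph Dop2 Dop2D Dop20).
by apply: eq_bigr => m' hm; rewrite inner_total.
Qed.

Lemma P2_eval n :
  (#|[set m : {ffun {set 'I_n} -> 'I_3} | is_mspart m]|%:R : rat) = eval2 (P2 n) 1 1.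
Proof.
rewrite /eval2 /P2 !horner_sum.
transitivity (\sum_(m : {ffun {set 'I_n} -> 'I_3} | is_mspart m) (1 : rat)).
  by rewrite sumr_const cardsE.
apply: eq_bigr => m _.
by rewrite hornerM !hornerXn /z1 -rmorphXn hornerC expr1n mulr1 hornerXn expr1n.
Qed.


Theorem mainTheorem1 (n : nat) (hn : (1 <= n)%N) :
  P2 n = Dop2 (P2 n.-1) /\
  (#|[set m : {ffun {set 'I_n} -> 'I_3} | is_mspart m]|%:R : rat) = eval2 (P2 n) 1 1.
Proof.
case: n hn => [//|n] _; split; [exact: P2_rec | exact: P2_eval].
Qed.
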